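(* Let $R$ be a commutative ring with unit, let $E$ be an $R$-module and $E^*=\mathrm{Hom}_R(E,R)$. Then the quasi-coherent $R$-module associated with $E^*$, i.e. the functor $B\mapsto E^*\otimes_R B$, coincides (via the canonical morphism) with the dual functor $\mathbf{E}^*$ if and only if $E$ is a projective $R$-module of finite type.
   Context: All functors are covariant functors on the category of commutative $R$-algebras. For an $R$-module $M$, $\mathbf{M}$ denotes the functor of $R$-modules $B\mapsto M\otimes_R B$ (a quasi-coherent $R$-module); $\mathbf{R}$ is $B\mapsto B$. For functors of $R$-modules $F,H$, $\mathbf{Hom}_R(F,H)$ is the functor $B\mapsto \mathrm{Hom}_B(F_{|B},H_{|B})$, where $F_{|B}$ is the restriction of $F$ to commutative $B$-algebras, and $F^*:=\mathbf{Hom}_R(F,\mathbf{R})$. Thus $\mathbf{E}^*(B)=\mathrm{Hom}_B(\mathbf{E}_{|B},\mathbf{R}_{|B})$, which is identified with $\mathrm{Hom}_R(E,B)$; the canonical morphism from $B\mapsto E^*\otimes_R B$ to $\mathbf{E}^*$ sends $w\otimes b$ to $e\mapsto w(e)b$. *)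

(* Defs.v *)
From HB Require Import structures.
From mathcomp Require Import all_boot all_order all_algebra.
Set Implicit Arguments. Unset Strict Implicit. Unset Printing Implicit Defensive.
Import GRing.Theory.
Local Open Scope ring_scope.

Section Defs.
Variable R : comPzRingType.

Definition linR (U V : lmodType R) (f : U -> V) : Prop :=
  forall (a : R) (x y : U), f (a *: x + y) = a *: f x + f y.

Definition finite_type (E : lmodType R) : Prop :=
  exists s : seq E, forall x : E,
    exists c : 'I_(size s) -> R, x = \sum_(i < size s) c i *: s`_i.

Definition projective (E : lmodType R) : Prop :=
  forall (M N : lmodType R) (p : M -> N) (f : E -> N),
    linR p -> (forall y : N, exists x : M, p x = y) -> linR f ->
    exists h : E -> M, linR h /\ forall e : E, p (h e) = f e.

(* The canonical R-bilinear map  E^* x B -> Hom_R(E,B) = E^*(B),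
   (w, b) |-> (e |-> w(e) b). *)
Definition canmap (E : lmodType R) (B : comAlgType R) (w : E -> R^o) (b : B)
  : E -> B := fun e => w e *: b.

(* The canonical morphism  E^* (x)_R B -> Hom_R(E,B)  is an isomorphism,
   i.e. (canmap) exhibits Hom_R(E,B) (the R-linear maps E -> B, with pointwise
   operations) as the tensor product E^* (x)_R B, where E^* is the set of
   R-linear maps E -> R.  Stated via the universal property of the tensor
   product: every R-bilinear map on E^* x B factors uniquely through canmap
   by an R-linear map on Hom_R(E,B). *)
Definition canonical_iso (E : lmodType R) (B : comAlgType R) : Prop :=
  forall (M : lmodType R) (f : (E -> R^o) -> B -> M),
    (forall (a : R) (w w' : E -> R^o) (b : B), linR w -> linR w' ->
        f (fun e => a *: w e + w' e) b = a *: f w b + f w' b) ->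
    (forall (a : R) (w : E -> R^o) (b b' : B), linR w ->
        f w (a *: b + b') = a *: f w b + f w b') ->
    (exists g : (E -> B) -> M,
        (forall (a : R) (h h' : E -> B), linR h -> linR h' ->
            g (fun e => a *: h e + h' e) = a *: g h + g h') /\
        (forall (w : E -> R^o) (b : B), linR w -> g (canmap w b) = f w b)) /\
    (forall g1 g2 : (E -> B) -> M,
        (forall (a : R) (h h' : E -> B), linR h -> linR h' ->
            g1 (fun e => a *: h e + h' e) = a *: g1 h + g1 h') ->
        (forall (a : R) (h h' : E -> B), linR h -> linR h' ->
            g2 (fun e => a *: h e + h' e) = a *: g2 h + g2 h') ->
        (forall (w : E -> R^o) (b : B), linR w -> g1 (canmap w b) = f w b) ->
        (forall (w : E -> R^o) (b : B), linR w -> g2 (canmap w b) = f w b) ->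
        forall h : E -> B, linR h -> g1 h = g2 h).

End Defs.

(* Main.v *)
Require Import Defs.
From HB Require Import structures.
From mathcomp Require Import all_boot all_order all_algebra.
From mathcomp Require boolp.
From Stdlib Require Import ClassicalEpsilon FunctionalExtensionality PropExtensionality ProofIrrelevance.
Import GRing.Theory.
Local Open Scope ring_scope.

Definition dual (R : comPzRingType) (E : lmodType R) (H : (1:R) != 0) : Type := (R * E)%type.
HB.instance Definition _ R E H := GRing.Lmodule.copy (@dual R E H) (R^o * E)%type.

Section D.
Context (R : comPzRingType) (E : lmodType R) (H : (1:R) != 0).
Local Notation D := (@dual R E H).
Definition dmul (x y : D) : D := (x.1 * y.1, x.1 *: y.2 + y.1 *: x.2).
Definition done : D := (1, 0).
Lemma dmulA : associative dmul.
Proof. move=> [a x] [b y] [c z]; rewrite /dmul /=; congr pair; first by rewrite mulrA.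
rewrite !scalerDr !scalerA !addrA (mulrC c a) (mulrC c b); congr (_ + _); by rewrite addrC. Qed.
Lemma dmulC : commutative dmul.
Proof. by move=> [a x] [b y]; rewrite /dmul /= mulrC addrC. Qed.
Lemma dmul1 : left_id done dmul.
Proof. by move=> [a x]; rewrite /dmul /= mul1r scale1r scaler0 addr0. Qed.
Lemma dmulD : left_distributive dmul +%R.
Proof. move=> [a x] [b y] [c z]; rewrite /dmul /=; congr pair; first by rewrite mulrDl.
by rewrite scalerDl scalerDr addrACA. Qed.
Lemma done_neq0 : done != 0.
Proof. apply/eqP => [[]]; by apply/eqP. Qed.
End D.
HB.instance Definition _ R E H := GRing.Zmodule_isComNzRing.Build (@dual R E H)
  (@dmulA R E H) (@dmulC R E H) (@dmul1 R E H) (@dmulD R E H) (@done_neq0 R E H).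
Lemma dscalerAl (R : comPzRingType) (E : lmodType R) (H : (1:R) != 0) (a : R) (u v : @dual R E H) : a *: (u * v) = (a *: u) * v.
Proof. case: u v => [b x] [c y]; rewrite /GRing.mul /= /dmul /=. congr pair; first exact: mulrA.
rewrite /= scalerDr !scalerA; congr (_ + _); by rewrite mulrC. Qed.
HB.instance Definition _ (R : comPzRingType) (E : lmodType R) H := GRing.Lmodule_isLalgebra.Build R (@dual R E H) (@dscalerAl R E H).
HB.instance Definition _ (R : comPzRingType) (E : lmodType R) H := GRing.Lalgebra_isComAlgebra.Build R (@dual R E H).
Section Q.
Context (R : comPzRingType) (E : lmodType R) (B : comAlgType R).
Definition V := E -> B.
Definition vadd (x y : V) : V := fun e => x e + y e.
Definition vopp (x : V) : V := fun e => - x e.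
Definition vscale (a : R) (x : V) : V := fun e => a *: x e.
Definition vzero : V := fun _ => 0.
Definition lin (w : E -> R^o) := forall (a : R) (x y : E), w (a *: x + y) = a *: w x + w y.
Inductive Sp : V -> Prop :=
| Sp0 : Sp vzero
| Spc (w : E -> R^o) (b : B) : lin w -> Sp (fun e => w e *: b)
| Spadd x y : Sp x -> Sp y -> Sp (vadd x y)
| Spscale a x : Sp x -> Sp (vscale a x).
Arguments Spadd {x y}. Arguments Spscale a {x}.
Lemma Sp_ext x y : Sp x -> (forall e, x e = y e) -> Sp y.
Proof. by move=> Sx H; have -> : y = x by apply: functional_extensionality => e; rewrite H. Qed.
Arguments Sp_ext {x y}.
Definition rel x y := Sp (vadd x (vopp y)).
Lemma rel_pt x y : (forall e, x e = y e) -> rel x y.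
Proof. move=> H; rewrite /rel; apply: (@Sp_ext vzero); first exact: Sp0. move=> e; by rewrite /vzero /vadd /vopp H subrr. Qed.
Lemma rel_refl x : rel x x. Proof. exact: rel_pt. Qed.
Lemma rel_sym x y : rel x y -> rel y x.
Proof. move=> H; rewrite /rel; eapply (Sp_ext (Spscale (-1) H)) => e.
by rewrite /vscale /vadd /vopp scaleN1r opprB. Qed.
Lemma rel_trans x y z : rel x y -> rel y z -> rel x z.
Proof. move=> H1 H2; rewrite /rel; eapply (Sp_ext (Spadd H1 H2)) => e.
by rewrite /vadd /vopp addrA subrK. Qed.
Lemma rel_add x x' y y' : rel x x' -> rel y y' -> rel (vadd x y) (vadd x' y').
Proof. move=> H1 H2; rewrite /rel; eapply (Sp_ext (Spadd H1 H2)) => e.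
by rewrite /vadd /vopp opprD addrACA. Qed.
Lemma rel_scale a x x' : rel x x' -> rel (vscale a x) (vscale a x').
Proof. move=> H1; rewrite /rel; eapply (Sp_ext (Spscale a H1)) => e.
by rewrite /vadd /vopp /vscale scalerBr. Qed.
Lemma rel_opp x x' : rel x x' -> rel (vopp x) (vopp x').
Proof. move=> H1; rewrite /rel; eapply (Sp_ext (Spscale (-1) H1)) => e.
by rewrite /vadd /vopp /vscale scaleN1r opprD. Qed.

Arguments rel_sym {x y}. Arguments rel_trans {x y z}. Arguments rel_add {x x' y y'}. Arguments rel_scale a {x x'}. Arguments rel_opp {x x'}.
Definition canon (x : V) : V := epsilon (inhabits x) (rel x).
Lemma canon_rel x : rel x (canon x).
Proof. exact: (epsilon_spec (inhabits x) (rel x) (ex_intro _ x (rel_refl x))). Qed.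
Lemma canon_eq x y : rel x y -> canon x = canon y.
Proof.
move=> H; rewrite /canon; have -> : rel x = rel y; last by rewrite (proof_irrelevance _ (inhabits x) (inhabits y)).
apply: functional_extensionality => z; apply: propositional_extensionality; split=> Hz.
  exact: rel_trans (rel_sym H) Hz.
exact: rel_trans H Hz.
Qed.
Lemma canon_idem x : canon (canon x) = canon x.
Proof. exact/canon_eq/rel_sym/canon_rel. Qed.
Definition Qt := {x : V | canon x = x}.
Definition mkQ x : Qt := exist _ (canon x) (canon_idem x).
Lemma Qeq (u v : Qt) : proj1_sig u = proj1_sig v -> u = v.
Proof. case: u v => [x hx] [y hy] /= exy; subst; f_equal; apply: proof_irrelevance. Qed.
Lemma mkQ_val u : mkQ (proj1_sig u) = u.
Proof. by apply: Qeq; case: u. Qed.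
Lemma mkQ_eq x y : rel x y -> mkQ x = mkQ y.
Proof. by move=> H; apply: Qeq; apply: canon_eq. Qed.
Lemma mkQ_rel x y : mkQ x = mkQ y -> rel x y.
Proof. move=> /(f_equal (@proj1_sig _ _)) /= H.
apply: rel_trans (canon_rel x) _; rewrite H; exact: rel_sym (canon_rel y). Qed.
Lemma relc x : rel (canon x) x. Proof. exact/rel_sym/canon_rel. Qed.

Definition qzero := mkQ vzero.
Definition qadd (u v : Qt) := mkQ (vadd (proj1_sig u) (proj1_sig v)).
Definition qopp (u : Qt) := mkQ (vopp (proj1_sig u)).
Definition qscale a (u : Qt) := mkQ (vscale a (proj1_sig u)).
Lemma qadd_mk x y : qadd (mkQ x) (mkQ y) = mkQ (vadd x y).
Proof. exact/mkQ_eq/rel_add/relc/relc. Qed.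
Lemma qopp_mk x : qopp (mkQ x) = mkQ (vopp x).
Proof. exact/mkQ_eq/rel_opp/relc. Qed.
Lemma qscale_mk a x : qscale a (mkQ x) = mkQ (vscale a x).
Proof. exact/mkQ_eq/rel_scale/relc. Qed.
Lemma qind (P : Qt -> Prop) : (forall x, P (mkQ x)) -> forall u, P u.
Proof. by move=> H u; rewrite -(mkQ_val u). Qed.

Lemma qaddA : associative qadd.
Proof. move=> u v w; elim/qind: u; move=> x; elim/qind: v => y; elim/qind: w => z.
rewrite !qadd_mk; apply/mkQ_eq/rel_pt => e; exact: addrA. Qed.
Lemma qaddC : commutative qadd.
Proof. move=> u v; elim/qind: u => x; elim/qind: v => y.
rewrite !qadd_mk; apply/mkQ_eq/rel_pt => e; exact: addrC. Qed.
Lemma qadd0 : left_id qzero qadd.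
Proof. move=> u; elim/qind: u => x.
rewrite qadd_mk; apply/mkQ_eq/rel_pt => e; exact: add0r. Qed.
Lemma qaddN : left_inverse qzero qopp qadd.
Proof. move=> u; elim/qind: u => x.
rewrite qopp_mk qadd_mk; apply/mkQ_eq/rel_pt => e; exact: addNr. Qed.
Lemma qscaleA a b u : qscale a (qscale b u) = qscale (a * b) u.
Proof. elim/qind: u => x.
rewrite !qscale_mk; apply/mkQ_eq/rel_pt => e; exact: scalerA. Qed.
Lemma qscale1 : left_id 1 qscale.
Proof. move=> u; elim/qind: u => x.
rewrite !qscale_mk; apply/mkQ_eq/rel_pt => e; exact: scale1r. Qed.
Lemma qscaleDr : right_distributive qscale qadd.
Proof. move=> a u v; elim/qind: u => x; elim/qind: v => y.
rewrite qadd_mk !qscale_mk (qadd_mk (vscale a x)). apply/mkQ_eq/rel_pt => e; exact: scalerDr. Qed.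
Lemma qscaleDl u : {morph qscale^~ u : a b / a + b >-> qadd a b}.
Proof. move=> a b; elim/qind: u => x.
rewrite !qscale_mk qadd_mk; apply/mkQ_eq/rel_pt => e; exact: scalerDl. Qed.
End Q.
Arguments Sp {R E B}. Arguments Spc {R E B w} b. Arguments Sp_ext {R E B x y}. Arguments rel {R E B}.
Arguments mkQ {R E B}. Arguments mkQ_eq {R E B x y}. Arguments mkQ_rel {R E B x y}.
Arguments qscale_mk {R E B}. Arguments qadd_mk {R E B}. Arguments vscale {R E B}.
Arguments vadd {R E B}. Arguments vopp {R E B}. Arguments vzero {R E B}.
Arguments qadd {R E B}. Arguments qscale {R E B}.

HB.instance Definition _ (R : comPzRingType) (E : lmodType R) (B : comAlgType R) := boolp.gen_eqMixin (@Qt R E B).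
HB.instance Definition _ (R : comPzRingType) (E : lmodType R) (B : comAlgType R) := boolp.gen_choiceMixin (@Qt R E B).
HB.instance Definition _ (R : comPzRingType) (E : lmodType R) (B : comAlgType R) := GRing.isZmodule.Build (@Qt R E B)
  (@qaddA R E B) (@qaddC R E B) (@qadd0 R E B) (@qaddN R E B).
HB.instance Definition _ (R : comPzRingType) (E : lmodType R) (B : comAlgType R) :=
  GRing.Zmodule_isLmodule.Build R (@Qt R E B)
  (@qscaleA R E B) (@qscale1 R E B) (@qscaleDr R E B) (@qscaleDl R E B).

Section Gen.
Context (R : comPzRingType).
Lemma scaleRo (a : R) (r : R^o) : a *: r = a * r. Proof. by []. Qed.

Lemma linR0 (U W : lmodType R) (f : U -> W) : linR f -> f 0 = 0.
Proof. move=> Hf; have := Hf (-1) 0 0; by rewrite scaleN1r addNr => ->; rewrite scaleN1r addNr. Qed.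
Arguments linR0 {U W f}.
Lemma linRD (U W : lmodType R) (f : U -> W) : linR f -> forall x y, f (x + y) = f x + f y.
Proof. by move=> Hf x y; have := Hf 1 x y; rewrite !scale1r. Qed.
Arguments linRD {U W f}.
Lemma linRZ (U W : lmodType R) (f : U -> W) : linR f -> forall a x, f (a *: x) = a *: f x.
Proof. by move=> Hf a x; rewrite -[a *: x]addr0 Hf (linR0 Hf) addr0. Qed.
Arguments linRZ {U W f}.
Lemma linR_sum (U W : lmodType R) (f : U -> W) : linR f ->
  forall n (c : 'I_n -> R) (x : 'I_n -> U),
  f (\sum_(i < n) c i *: x i) = \sum_(i < n) c i *: f (x i).
Proof.
move=> Hf; elim=> [|n IH] c x; first by rewrite !big_ord0 (linR0 Hf).
by rewrite !big_ord_recr /= (linRD Hf) IH (linRZ Hf).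
Qed.
Arguments linR_sum {U W f}.

Lemma linR_sumfun (E U : lmodType R) n (c : 'I_n -> R) (F : 'I_n -> E -> U) :
  (forall i, linR (F i)) -> linR (fun e => \sum_(i < n) c i *: F i e).
Proof.
move=> HF a x y. rewrite scaler_sumr -big_split /=; apply: eq_bigr => i _.
by rewrite HF scalerDr !scalerA mulrC.
Qed.

Definition Glin (E U M : lmodType R) (G : (E -> U) -> M) :=
  forall (a : R) (h h' : E -> U), linR h -> linR h' ->
    G (fun e => a *: h e + h' e) = a *: G h + G h'.
Arguments Glin {E U M}.

Lemma linR_zero (E U : lmodType R) : linR (fun _ : E => (0 : U)).
Proof. by move=> a x y; rewrite scaler0 addr0. Qed.

Lemma Glin0 (E U M : lmodType R) (G : (E -> U) -> M) : Glin G -> G (fun _ => 0) = 0.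
Proof.
move=> HG; have H := HG (-1) _ _ (linR_zero E U) (linR_zero E U).
rewrite (scaleN1r (G _)) (addNr (G _)) in H; rewrite -H; congr G.
by apply: functional_extensionality => e; rewrite scaler0 addr0.
Qed.
Arguments Glin0 {E U M G}.

Lemma Gsum (E U M : lmodType R) (G : (E -> U) -> M) : Glin G ->
  forall n (c : 'I_n -> R) (F : 'I_n -> E -> U), (forall i, linR (F i)) ->
  G (fun e => \sum_(i < n) c i *: F i e) = \sum_(i < n) c i *: G (F i).
Proof.
move=> HG; elim=> [|n IH] c F HF.
  rewrite big_ord0; rewrite -(Glin0 HG); congr G.
  by apply: functional_extensionality => e; rewrite big_ord0.
have -> : (fun e => \sum_(i < n.+1) c i *: F i e) =
  (fun e => c ord_max *: F ord_max e + \sum_(i < n) c (widen_ord (leqnSn n) i) *: F (widen_ord (leqnSn n) i) e).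
  by apply: functional_extensionality => e; rewrite big_ord_recr addrC.
rewrite HG //; last by apply: linR_sumfun => i; exact: HF.
rewrite IH; last by move=> i; exact: HF.
by rewrite big_ord_recr /= addrC.
Qed.
Arguments Gsum {E U M G}.

Definition Rep (E : lmodType R) := exists n (ws : 'I_n -> E -> R^o) (xs : 'I_n -> E),
  (forall i, linR (ws i)) /\ forall e, e = \sum_(i < n) ws i e *: xs i.

Lemma Rep_fp (E : lmodType R) : Rep E -> finite_type E /\ projective E.
Proof.
move=> [n [ws [xs [Hw He]]]]; split.
  have : forall (s : seq E), size s = n -> (forall i : 'I_n, s`_i = xs i) -> finite_type E.
    move=> s Hs; move: Hs ws xs Hw He => <- ws xs Hw He Hx.
    exists s => x; exists (fun i => ws i x); rewrite [LHS]He.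
    by apply: eq_bigr => i _; rewrite Hx.
  move=> HH; apply: (HH [seq xs i | i <- enum 'I_n]); first by rewrite size_map size_enum_ord.
  move=> i; rewrite (nth_map i); last by rewrite size_enum_ord.
  by rewrite nth_ord_enum.
move=> M N p f Hp Hs Hf.
pose m i := epsilon (inhabits (0 : M)) (fun m => p m = f (xs i)).
have Hm : forall i, p (m i) = f (xs i).
  move=> i; have [y Hy] := Hs (f (xs i)).
  exact: (epsilon_spec (inhabits (0 : M)) (fun m => p m = f (xs i)) (ex_intro _ y Hy)).
exists (fun e => \sum_(i < n) ws i e *: m i); split.
  move=> a x y; rewrite scaler_sumr -big_split /=; apply: eq_bigr => i _.
  by rewrite Hw scalerDl scalerA.
move=> e; rewrite (linR_sum Hp); rewrite [in RHS](He e) (linR_sum Hf).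
by apply: eq_bigr => i _; rewrite Hm.
Qed.

Lemma fp_Rep (E : lmodType R) : finite_type E -> projective E -> Rep E.
Proof.
move=> [s Hs] Hpr.
pose pm (c : 'rV[R]_(size s)) : E := \sum_(i < size s) c 0 i *: s`_i.
have Hpm : linR pm.
  move=> a c c'; rewrite /pm scaler_sumr -big_split /=; apply: eq_bigr => i _.
  by rewrite !mxE scalerDl scalerA.
have Hsurj : forall y, exists x, pm x = y.
  move=> y; have [c Hc] := Hs y; exists (\row_i c i).
  by rewrite Hc /pm; apply: eq_bigr => i _; rewrite mxE.
have [h [Hh Hph]] := Hpr _ _ pm id Hpm Hsurj (fun a x y => erefl).
exists (size s), (fun i e => h e 0 i), (fun i => s`_i); split.
  by move=> i a x y; rewrite /= Hh !mxE.
by move=> e; rewrite -[LHS]Hph.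
Qed.

Lemma canmap_lin (E : lmodType R) (B : comAlgType R) (w : E -> R^o) (b : B) :
  linR w -> linR (canmap w b).
Proof. by move=> Hw a x y; rewrite /canmap Hw scalerDl scalerA. Qed.

Lemma Rep_iso (E : lmodType R) : Rep E -> forall B : comAlgType R, canonical_iso E B.
Proof.
move=> [n [ws [xs [Hw He]]]] B M f Hf1 Hf2.
have Hf2l : forall w, linR w -> linR (f w) by move=> w Hw' a b b'; exact: Hf2.
have Hf1l : forall b, Glin (fun w : E -> R^o => f w b) by move=> b a w w' Hw1 Hw2; exact: Hf1.
split.
  exists (fun H => \sum_(i < n) f (ws i) (H (xs i))); split.
    move=> a h h' Hh Hh' /=; rewrite scaler_sumr -big_split /=; apply: eq_bigr => i _.
    by rewrite Hf2.
  move=> w b Hw'.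
  have Hwe : (fun e => \sum_(i < n) w (xs i) *: ws i e) = w.
    apply: functional_extensionality => e.
    rewrite [in RHS](He e) (linR_sum Hw'); apply: eq_bigr => i _.
    by rewrite !scaleRo mulrC.
  rewrite -[in RHS]Hwe (Gsum (Hf1l b)) //; apply: eq_bigr => i _.
  by rewrite /canmap (linRZ (Hf2l _ (Hw i))).
move=> g1 g2 Hg1 Hg2 Hc1 Hc2 h Hh.
have -> : h = (fun e => \sum_(i < n) 1 *: canmap (ws i) (h (xs i)) e).
  apply: functional_extensionality => e.
  rewrite [in LHS](He e) (linR_sum Hh); apply: eq_bigr => i _.
  by rewrite scale1r.
rewrite (Gsum Hg1); last by move=> i; apply: canmap_lin.
rewrite (Gsum Hg2); last by move=> i; apply: canmap_lin.
by apply: eq_bigr => i _; rewrite Hc1 // Hc2.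
Qed.

End Gen.
Arguments Rep {R}. Arguments Rep_fp {R E}. Arguments fp_Rep {R E}. Arguments Rep_iso {R E}.

Section Fwd.
Context (R : comPzRingType) (E : lmodType R).

Lemma iso_Sp (B : comAlgType R) : canonical_iso E B ->
  forall h : E -> B, linR h -> Sp h.
Proof.
move=> Hiso h Hh.
have [_ Hu] := Hiso (Qt R E B) (fun _ _ => 0)
  (fun a w w' b _ _ => esym (etrans (congr1 (fun z => z + 0) (scaler0 _ a)) (addr0 _)))
  (fun a w b b' _ => esym (etrans (congr1 (fun z => z + 0) (scaler0 _ a)) (addr0 _))).
have Hl : forall a (x y : E -> B), mkQ (fun e => a *: x e + y e) = a *: mkQ x + mkQ y.
  move=> a x y; rewrite -[RHS]/(qadd (qscale a (mkQ x)) (mkQ y)).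
  by rewrite qscale_mk (qadd_mk (vscale a x)).
have := Hu (fun h => mkQ h) (fun _ => 0).
have Z : forall a, a *: (0 : Qt R E B) + 0 = 0 by move=> a; rewrite scaler0 addr0.
move=> /(_ (fun a x y _ _ => Hl a x y) (fun a _ _ _ _ => esym (Z a))) H.
have Hc : forall w b, linR w -> mkQ (canmap w b) = (0 : Qt R E B).
  move=> w b Hw; apply: mkQ_eq; rewrite /rel; eapply (Sp_ext (Spc b Hw)) => e.
  by rewrite /vadd /vopp /vzero /canmap oppr0 addr0.
have := H Hc (fun _ _ _ => erefl) h Hh.
move=> /mkQ_rel HS; rewrite /rel in HS; eapply (Sp_ext HS) => e.
by rewrite /vadd /vopp /vzero oppr0 addr0.
Qed.

Lemma Sp_dual (H : (1:R) != 0) (x : E -> dual R E H) : Sp x ->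
  exists l : seq ((E -> R^o) * E), (forall p, List.In p l -> linR p.1) /\
    forall e, (x e).2 = \sum_(p <- l) p.1 e *: p.2.
Proof.
elim=> [|w b Hw|y z _ [l1 [H1 E1]] _ [l2 [H2 E2]]|a y _ [l [H1 E1]]].
- by exists [::]; split => // e; rewrite big_nil.
- by exists [:: (w, b.2)]; split => [p [<-|[]]|e] //; rewrite big_seq1.
- exists (l1 ++ l2); split.
    by move=> p Hp; case: (List.in_app_or _ _ _ Hp) => Hq; [exact: H1 | exact: H2].
  by move=> e; rewrite big_cat -E1 -E2.
- exists [seq (p.1, a *: p.2) | p <- l]; split.
    move=> p Hp; have [q [<- Hq]] := (List.in_map_iff _ _ _).1 Hp; exact: (H1 q Hq).
  move=> e; rewrite big_map /vscale /= E1 scaler_sumr; apply: eq_bigr => p _.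
  by rewrite /= !scalerA mulrC.
Qed.

Lemma list_Rep (l : seq ((E -> R^o) * E)) : (forall p, List.In p l -> linR p.1) ->
  (forall e, e = \sum_(p <- l) p.1 e *: p.2) -> Rep E.
Proof.
move=> Hl He; pose p0 : (E -> R^o) * E := (fun _ => 0, 0).
exists (size l), (fun i => (nth p0 l i).1), (fun i => (nth p0 l i).2); split.
  move=> i; apply: Hl; move: (ltn_ord i); move: (nat_of_ord i) => k; clear i He.
  elim: l k => [//|q l IH] [|k] /=; first by left.
  by move=> Hk; right; apply: IH.
move=> e; rewrite [LHS]He (big_nth p0) big_mkord.
by [].
Qed.

End Fwd.
Arguments iso_Sp {R E B}. Arguments Sp_dual {R E H x}. Arguments list_Rep {R E l}.

Lemma trivial_mod (R : comPzRingType) (M : lmodType R) : (1 : R) = 0 -> forall m : M, m = 0.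
Proof. by move=> H m; rewrite -[m]scale1r H scale0r. Qed.
Arguments trivial_mod {R M}.

Theorem mainTheorem4 (R : comPzRingType) (E : lmodType R) :
  (forall B : comAlgType R, canonical_iso E B) <->
  (finite_type E /\ projective E).
Proof.
split; last by move=> [Hf Hp]; exact: (Rep_iso (fp_Rep Hf Hp)).
move=> Hiso.
have [H10|H] := eqVneq (1 : R) 0.
  split.
    exists [::] => x; exists (fun _ => 0); rewrite big_ord0; exact: trivial_mod.
  move=> M N p f Hp Hs Hf; exists (fun _ => 0); split.
    by move=> a x y; rewrite scaler0 addr0.
  by move=> e; rewrite (trivial_mod H10 (p 0)) (trivial_mod H10 (f e)).
pose h0 (e : E) : dual R E H := ((0 : R), e).
have Hh0 : linR h0.
  move=> a x y; rewrite /h0; congr pair => /=.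
  by rewrite /GRing.scale /= mulr0 addr0.
have [l [Hl He]] := Sp_dual (iso_Sp (Hiso _) h0 Hh0).
apply: Rep_fp; apply: (list_Rep Hl) => e; exact: He.
Qed.
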